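(* For every $\varepsilon>0$ there exists $N=N(\varepsilon,\Omega)>0$ such that for every $n>N$, every probability measure $\mu\in\mathcal P(\Omega^n)$ and every partition $\vec V_0$ of $[n]$ of size $\#\vec V_0\le 1/\varepsilon$ the following holds: there exist a partition $\vec V$ of $[n]$ refining $\vec V_0$ and a partition $\vec S$ of $\Omega^n$ such that $\#\vec V+\#\vec S\le N$ and $\mu$ is $\varepsilon$-homogeneous with respect to $(\vec V,\vec S)$.
   Context: $\Omega$ is a fixed finite nonempty set and $\mathcal P(\mathcal X)$ denotes the set of probability measures on a finite set $\mathcal X$; $\|\cdot\|_{TV}$ is the total variation norm. For $\sigma\in\Omega^n$, nonempty $S\subset[n]$ and $\omega\in\Omega$ let $\sigma[\omega|S]=|\sigma^{-1}(\omega)\cap S|/|S|$, so $\sigma[\cdot|S]\in\mathcal P(\Omega)$. For $\mu\in\mathcal P(\Omega^n)$ and $X:\Omega^n\to\mathbb R$, $\langle X(\boldsymbol\sigma)\rangle_\mu=\sum_\sigma\mu(\sigma)X(\sigma)$; for $A\subset\Omega^n$ with $\mu(A)>0$, $\mu[\cdot|A]$ is the conditional measure. The size $\#\vec V$ of a partition $\vec V=(V_1,\dots,V_k)$ is $k$; $\vec W$ refines $\vec V$ if every class of $\vec W$ is contained in a class of $\vec V$. $\mu$ is $\varepsilon$-regular on $U\subset[n]$ if for every $S\subset U$ with $|S|\ge\varepsilon|U|$ we have $\langle\|\boldsymbol\sigma[\cdot|S]-\boldsymbol\sigma[\cdot|U]\|_{TV}\rangle_\mu<\varepsilon$. $\mu$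 is $\varepsilon$-regular with respect to a partition $\vec V$ of $[n]$ if there is $J\subset[\#\vec V]$ with $\sum_{i\notin J}|V_i|<\varepsilon n$ such that $\mu$ is $\varepsilon$-regular on $V_i$ for all $i\in J$. For a partition $\vec V$ of $[n]$ and a partition $\vec S$ of $\Omega^n$, $\mu$ is $\varepsilon$-homogeneous with respect to $(\vec V,\vec S)$ if there is $I\subset[\#\vec S]$ such that: (HM1) $\mu(S_i)>0$ for all $i\in I$ and $\sum_{i\notin I}\mu(S_i)<\varepsilon$; (HM2) for all $i\in[\#\vec S]$, $j\in[\#\vec V]$: $\max_{\sigma,\sigma'\in S_i}\|\sigma[\cdot|V_j]-\sigma'[\cdot|V_j]\|_{TV}<\varepsilon$; (HM3) for all $i\in I$, $\mu[\cdot|S_i]$ is $\varepsilon$-regular with respect to $\vec V$; (HM4) $\mu$ is $\varepsilon$-regular with respect to $\vec V$. *)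

(* Defs.v *)
From HB Require Import structures.
From mathcomp Require Import all_boot all_order all_algebra.
From mathcomp Require Import reals.
Set Implicit Arguments. Unset Strict Implicit. Unset Printing Implicit Defensive.
Import Order.TTheory GRing.Theory Num.Theory.
Local Open Scope ring_scope.

Section Defs.
Variables (R : realType) (Omega : finType) (n : nat).

Definition config := {ffun 'I_n -> Omega}.

Definition is_prob (X : finType) (mu : {ffun X -> R}) : Prop :=
  (forall x, 0 <= mu x) /\ \sum_x mu x = 1.

(* total variation distance: ||p - q||_TV = (1/2) sum |p - q| = max_A |p(A)-q(A)| *)
Definition tv (p q : {ffun Omega -> R}) : R :=
  2^-1 * \sum_w `|p w - q w|.

Definition emp (sigma : config) (S : {set 'I_n}) : {ffun Omega -> R} :=
  [ffun w => #|[set i in S | sigma i == w]|%:R / #|S|%:R].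

Definition expect (mu : {ffun config -> R}) (X : config -> R) : R :=
  \sum_sigma mu sigma * X sigma.

Definition measure_of (mu : {ffun config -> R}) (A : {set config}) : R :=
  \sum_(sigma in A) mu sigma.

Definition cond (mu : {ffun config -> R}) (A : {set config}) : {ffun config -> R} :=
  [ffun sigma => (if sigma \in A then mu sigma else 0) / measure_of mu A].

Definition regular_on (eps : R) (mu : {ffun config -> R}) (U : {set 'I_n}) : Prop :=
  forall S : {set 'I_n}, S \subset U -> eps * #|U|%:R <= #|S|%:R ->
    expect mu (fun sigma => tv (emp sigma S) (emp sigma U)) < eps.

Definition regular_wrt (eps : R) (mu : {ffun config -> R}) (V : {set {set 'I_n}}) : Prop :=
  exists J : {set {set 'I_n}}, J \subset V /\
    (\sum_(B in V :\: J) #|B|%:R < eps * n%:R) /\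
    (forall B, B \in J -> regular_on eps mu B).

Definition refines (T : finType) (W V : {set {set T}}) : Prop :=
  forall B, B \in W -> exists2 C, C \in V & B \subset C.

Definition homogeneous (eps : R) (mu : {ffun config -> R})
    (V : {set {set 'I_n}}) (S : {set {set config}}) : Prop :=
  exists I : {set {set config}}, I \subset S /\
    ((forall A, A \in I -> 0 < measure_of mu A) /\
     \sum_(A in S :\: I) measure_of mu A < eps) /\
    (forall A B, A \in S -> B \in V ->
       forall sigma sigma', sigma \in A -> sigma' \in A ->
         tv (emp sigma B) (emp sigma' B) < eps) /\
    (forall A, A \in I -> regular_wrt eps (cond mu A) V) /\
    regular_wrt eps mu V.

End Defs.

(* Main.v *)
Require Import Defs.
From HB Require Import structures.
From mathcomp Require Import all_boot all_order all_algebra.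
From mathcomp Require Import reals ring lra.
Import Order.TTheory GRing.Theory Num.Theory.
Local Open Scope ring_scope.
Set Implicit Arguments. Unset Strict Implicit. Unset Printing Implicit Defensive.

Section CS.
Variable R : realType.
Lemma wcs (I : finType) (P : pred I) (w x : I -> R) :
  (forall i, P i -> 0 <= w i) ->
  (\sum_(i | P i) w i * x i)^+2 <= (\sum_(i | P i) w i) * \sum_(i | P i) w i * x i ^+ 2.
Proof.
move=> w0.
set W := \sum_(i | P i) w i; set S1 := \sum_(i | P i) w i * x i;
  set S2 := \sum_(i | P i) w i * x i ^+ 2.
have W0 : 0 <= W by apply: sumr_ge0.
case: (eqVneq W 0) => [Wz|Wnz].
  have wz : forall i, P i -> w i = 0.
    by move/eqP: Wz; rewrite psumr_eq0 // => /allP H i Pi; apply/eqP; have := H i; rewrite mem_index_enum Pi; apply.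
  rewrite /S1 big1 ?expr0n ?Wz ?mul0r //= => i Pi; by rewrite wz // mul0r.
have Wp : 0 < W by rewrite lt_neqAle eq_sym Wnz.
set m := S1 / W.
have H : 0 <= \sum_(i | P i) w i * (x i - m) ^+ 2.
  by apply: sumr_ge0 => i Pi; rewrite mulr_ge0 ?sqr_ge0 ?w0.
have E : \sum_(i | P i) w i * (x i - m) ^+ 2 = S2 - 2 * m * S1 + m ^+ 2 * W.
  rewrite (eq_bigr (fun i => w i * x i ^+2 - (2 * m) * (w i * x i) + m ^+ 2 * w i)); last by move=> i _; ring.
  by rewrite big_split /= sumrB -!mulr_sumr.
rewrite E in H.
have : 0 <= W * (S2 - 2 * m * S1 + m ^+ 2 * W) by rewrite mulr_ge0.
have -> : W * (S2 - 2 * m * S1 + m ^+ 2 * W) = W * S2 - S1 ^+ 2.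
  rewrite /m; field; by rewrite Wnz.
by rewrite subr_ge0.
Qed.

Lemma ucs (I : finType) (A : {pred I}) (x : I -> R) :
  (\sum_(i in A) x i)^+2 <= #|A|%:R * \sum_(i in A) x i ^+ 2.
Proof.
have := @wcs I (mem A) (fun _ => 1) x (fun _ _ => ler01).
rewrite sumr_const.
under eq_bigr do rewrite mul1r.
by under [X in _ <= _ * X]eq_bigr do rewrite mul1r; rewrite mulr_natl.
Qed.

Lemma sum_sub (I : finType) (A B : {set I}) (F : I -> R) :
  A \subset B -> (forall i, 0 <= F i) -> \sum_(i in A) F i <= \sum_(i in B) F i.
Proof.
move=> AB F0; rewrite [X in _ <= X](bigID (mem A)) /=.
rewrite [X in _ <= X + _](eq_bigl (mem A)); last first.
  move=> i /=; case iA: (i \in A); rewrite ?andbF ?andbT //=; exact: (subsetP AB).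
by rewrite lerDl; apply: sumr_ge0.
Qed.
Lemma sum_setT (I : finType) (F : I -> R) : \sum_(i in [set: I]) F i = \sum_i F i.
Proof. by apply: eq_bigl => i; rewrite inE. Qed.
End CS.

Section Basics.
Variables (R : realType) (Omega : finType) (n : nat).
Notation cfg := (config Omega n).

Definition cnt (s : cfg) (C : {set 'I_n}) (w : Omega) : R := \sum_(i in C) (s i == w)%:R.

Lemma card_cnt (s : cfg) (C : {set 'I_n}) w : #|[set i in C | s i == w]|%:R = cnt s C w.
Proof.
rewrite /cnt (eq_bigr (fun i => if s i == w then 1 else 0)); last by move=> i _; case: eqP.
rewrite -big_mkcondr /= -sum1_card natr_sum.
by apply: eq_bigl => i; rewrite inE.
Qed.

Lemma cnt_ge0 (s : cfg) (C : {set 'I_n}) w : 0 <= cnt s C w.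
Proof. by apply: sumr_ge0 => i _; rewrite ler0n. Qed.

Lemma cnt_le (s : cfg) (C : {set 'I_n}) w : cnt s C w <= #|C|%:R.
Proof.
rewrite -sum1_card natr_sum; apply: ler_sum => i _; by case: eqP.
Qed.

Lemma emp_cnt (s : cfg) (C : {set 'I_n}) w : #|C|%:R * emp R s C w = cnt s C w.
Proof.
rewrite /emp ffunE card_cnt.
case: (posnP #|C|) => [C0|Cp].
  rewrite C0 mul0r /cnt big_pred0 // => i; by rewrite (card0_eq C0).
by rewrite mulrC divfK // pnatr_eq0 -lt0n.
Qed.

Lemma emp_ge0 (s : cfg) (C : {set 'I_n}) w : 0 <= emp R s C w.
Proof. by rewrite /emp ffunE divr_ge0 ?ler0n. Qed.

Lemma emp_le1 (s : cfg) (C : {set 'I_n}) w : emp R s C w <= 1.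
Proof.
rewrite /emp ffunE card_cnt.
case: (posnP #|C|) => [C0|Cp]; first by rewrite C0 invr0 mulr0.
by rewrite ler_pdivrMr ?ltr0n // mul1r cnt_le.
Qed.

Lemma expect_ge0 (nu : {ffun cfg -> R}) X : (forall s, 0 <= nu s) -> (forall s, 0 <= X s) -> 0 <= expect nu X.
Proof. by move=> h1 h2; apply: sumr_ge0 => s _; rewrite mulr_ge0. Qed.

Lemma expect_le (nu : {ffun cfg -> R}) X Y : (forall s, 0 <= nu s) -> (forall s, X s <= Y s) -> expect nu X <= expect nu Y.
Proof. by move=> h1 h2; apply: ler_sum => s _; rewrite ler_wpM2l. Qed.

Lemma expectZ (nu : {ffun cfg -> R}) c X : expect nu (fun s => c * X s) = c * expect nu X.
Proof. by rewrite /expect mulr_sumr; apply: eq_bigr => s _; ring. Qed.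

Lemma expectB (nu : {ffun cfg -> R}) X Y : expect nu (fun s => X s - Y s) = expect nu X - expect nu Y.
Proof. by rewrite /expect -sumrB; apply: eq_bigr => s _; ring. Qed.

Lemma expect_sum (nu : {ffun cfg -> R}) (I : finType) (P : pred I) (F : I -> cfg -> R) :
  expect nu (fun s => \sum_(i | P i) F i s) = \sum_(i | P i) expect nu (F i).
Proof.
rewrite /expect exchange_big /=; apply: eq_bigr => s _; by rewrite mulr_sumr.
Qed.

Lemma jensen (nu : {ffun cfg -> R}) X : is_prob nu -> (expect nu X)^+2 <= expect nu (fun s => X s ^+ 2).
Proof.
case=> h0 h1; have := @wcs R _ predT (fun s => nu s) X (fun s _ => h0 s).
by rewrite h1 mul1r.
Qed.

End Basics.

Section Energy.
Variables (R : realType) (Omega : finType) (n : nat).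
Notation cfg := (config Omega n).
Notation emp := (emp R).
Notation cnt := (cnt R).

Definition en (s : cfg) (V : {set {set 'I_n}}) : R :=
  \sum_i \sum_w (emp s (pblock V i) w)^+2.

Lemma sum_blk (P : {set {set 'I_n}}) (T : {set 'I_n}) (s : cfg) w :
  partition P [set: 'I_n] -> (forall i, i \in T -> pblock P i \subset T) ->
  \sum_(i in T) emp s (pblock P i) w = cnt s T w.
Proof.
move=> /and3P[/eqP covP tP _] hT.
set P' := [set C in P | C \subset T].
have tP' : trivIset P' by apply: trivIsetS tP; apply/subsetP => C; rewrite inE => /andP[].
have cov : cover P' = T.
  apply/setP => i; apply/bigcupP/idP => [[C]|iT].
    by rewrite inE => /andP[_ CT] iC; exact: (subsetP CT).
  exists (pblock P i); last by rewrite mem_pblock covP inE.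
  by rewrite inE pblock_mem ?covP ?inE // hT.
rewrite -cov /cnt !big_trivIset //; apply: eq_bigr => C; rewrite inE => /andP[CP _].
rewrite (eq_bigr (fun _ => emp s C w)); last by move=> i iC; rewrite (def_pblock tP CP iC).
by rewrite sumr_const -mulr_natl emp_cnt.
Qed.

Lemma sum_cover (V : {set {set 'I_n}}) (F : 'I_n -> R) :
  partition V [set: 'I_n] -> \sum_i F i = \sum_(B in V) \sum_(i in B) F i.
Proof.
move=> /and3P[/eqP covV tV _]; rewrite -big_trivIset //.
by apply: eq_bigl => i; rewrite covV inE.
Qed.

Lemma pyth (V V' : {set {set 'I_n}}) (s : cfg) :
  partition V [set: 'I_n] -> partition V' [set: 'I_n] ->
  (forall i, pblock V' i \subset pblock V i) ->
  en s V' - en s V = \sum_i \sum_w (emp s (pblock V' i) w - emp s (pblock V i) w)^+2.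
Proof.
move=> pV pV' ref.
have pV0 := pV; move: pV0 => /and3P[/eqP covV tV _].
have key : forall w, \sum_i emp s (pblock V i) w * (emp s (pblock V' i) w - emp s (pblock V i) w) = 0.
  move=> w; rewrite (sum_cover _ pV); apply: big1 => B BV.
  rewrite (eq_bigr (fun i => emp s B w * (emp s (pblock V' i) w - emp s B w))); last first.
    by move=> i iB; rewrite (def_pblock tV BV iB).
  rewrite -mulr_sumr sumrB (@sum_blk V' B s w pV'); last first.
    by move=> i iB; rewrite -(def_pblock tV BV iB).
  by rewrite sumr_const -mulr_natl emp_cnt subrr mulr0.
rewrite /en -sumrB.
transitivity (\sum_i \sum_w ((emp s (pblock V' i) w - emp s (pblock V i) w)^+2 +
   2 * (emp s (pblock V i) w * (emp s (pblock V' i) w - emp s (pblock V i) w)))).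
  apply: eq_bigr => i _; rewrite -sumrB; apply: eq_bigr => w _; ring.
rewrite (eq_bigr (fun i => \sum_w (emp s (pblock V' i) w - emp s (pblock V i) w)^+2 +
   2 * \sum_w (emp s (pblock V i) w * (emp s (pblock V' i) w - emp s (pblock V i) w)))); last first.
  by move=> i _; rewrite big_split /= mulr_sumr.
rewrite big_split /= -mulr_sumr [X in _ + 2 * X]exchange_big /=.
by rewrite [X in _ + 2 * X]big1 ?mulr0 ?addr0 // => w _; exact: key.
Qed.

Lemma incr (V V' : {set {set 'I_n}}) (s : cfg) (B T : {set 'I_n}) :
  partition V [set: 'I_n] -> partition V' [set: 'I_n] ->
  B \in V -> T \subset B -> (forall i, i \in T -> pblock V' i \subset T) ->
  #|T|%:R * \sum_w (emp s T w - emp s B w)^+2 <=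
  \sum_w \sum_(i in T) (emp s (pblock V' i) w - emp s (pblock V i) w)^+2.
Proof.
move=> pV pV' BV TB hT.
have pV0 := pV; move: pV0 => /and3P[/eqP covV tV _].
rewrite mulr_sumr; apply: ler_sum => w _.
rewrite (eq_bigr (fun i => (emp s (pblock V' i) w - emp s B w)^+2)); last first.
  by move=> i iT; rewrite (def_pblock tV BV (subsetP TB i iT)).
have E : \sum_(i in T) (emp s (pblock V' i) w - emp s B w) = #|T|%:R * (emp s T w - emp s B w).
  by rewrite sumrB (@sum_blk V' T s w pV' hT) sumr_const -(emp_cnt R s T w) mulrBr; congr (_ - _); rewrite mulr_natl.
have cs := ucs (mem T) (fun i => emp s (pblock V' i) w - emp s B w).
rewrite /= E exprMn ?mulr1 in cs.
case: (posnP #|T|) => [T0|Tp].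
  by rewrite T0 mul0r; apply: sumr_ge0 => i _; exact: sqr_ge0.
have Tp' : (0 : R) < #|T|%:R by rewrite ltr0n.
by rewrite -(ler_pM2l Tp') mulrA -expr2.
Qed.

Lemma tv_sq (p q : {ffun Omega -> R}) :
  4 * tv p q ^+ 2 <= #|Omega|%:R * \sum_w (p w - q w)^+2.
Proof.
have := ucs (mem [set: Omega]) (fun w => `|p w - q w|).
rewrite cardsT.
have -> : \sum_(i in [set: Omega]) `|p i - q i| ^+ 2 = \sum_w (p w - q w)^+2.
  by rewrite sum_setT; apply: eq_bigr => w _; rewrite real_normK ?num_real.
rewrite sum_setT /tv => h; apply: le_trans h; rewrite le_eqVlt; apply/orP; left; apply/eqP.
by field.
Qed.

End Energy.

Section Gain.
Variables (R : realType) (Omega : finType) (n : nat).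
Notation cfg := (config Omega n).
Notation emp := (emp R).
Notation cnt := (cnt R).
Notation en := (@en R Omega n).

Lemma Dlow (V V' : {set {set 'I_n}}) (bad : pred {set 'I_n}) (Tf : {set 'I_n} -> {set 'I_n}) (s : cfg) :
  partition V [set: 'I_n] -> partition V' [set: 'I_n] ->
  (forall i, pblock V' i \subset pblock V i) ->
  (forall B, B \in V -> bad B -> Tf B \subset B /\ (forall i, i \in Tf B -> pblock V' i \subset Tf B)) ->
  \sum_(B in V | bad B) #|Tf B|%:R * \sum_w (emp s (Tf B) w - emp s B w)^+2 <= en s V' - en s V.
Proof.
move=> pV pV' ref hT.
rewrite pyth // (sum_cover _ pV) big_mkcondr /=; apply: ler_sum => B BV.
case: ifP => bB; last by apply: sumr_ge0 => i _; apply: sumr_ge0 => w _; exact: sqr_ge0.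
have [TB hTB] := hT B BV bB.
apply: le_trans (incr _ _ pV pV' BV TB hTB) _.
rewrite exchange_big /=; apply: sum_sub => // i.
by apply: sumr_ge0 => w _; exact: sqr_ge0.
Qed.

Lemma gain (V V' : {set {set 'I_n}}) (bad : pred {set 'I_n}) (Tf : {set 'I_n} -> {set 'I_n})
   (nu : {ffun cfg -> R}) (eps : R) :
  (0 < #|Omega|)%N -> is_prob nu -> 0 <= eps ->
  partition V [set: 'I_n] -> partition V' [set: 'I_n] ->
  (forall i, pblock V' i \subset pblock V i) ->
  (forall B, B \in V -> bad B -> [/\ Tf B \subset B, (forall i, i \in Tf B -> pblock V' i \subset Tf B),
      eps * #|B|%:R <= #|Tf B|%:R &
      eps <= expect nu (fun s => tv (emp s (Tf B)) (emp s B))]) ->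
  (\sum_(B in V | bad B) #|B|%:R) * (4 * eps ^+ 3 / #|Omega|%:R) <=
  expect nu (fun s => en s V' - en s V).
Proof.
move=> q0 pnu e0 pV pV' ref hT.
have nu0 : forall s, 0 <= nu s by case: pnu.
have qp : (0 : R) < #|Omega|%:R by rewrite ltr0n.
have hT' : forall B, B \in V -> bad B -> Tf B \subset B /\ (forall i, i \in Tf B -> pblock V' i \subset Tf B).
  by move=> B BV bB; have [] := hT B BV bB.
have H := expect_le nu0 (fun s => Dlow s pV pV' ref hT').
apply: le_trans H.
rewrite expect_sum mulr_suml; apply: ler_sum => B bB.
have /andP[BV bB'] : (B \in V) && bad B by [].
have [TB hTB card ex] := hT B BV bB'.
rewrite expectZ.
set E := expect nu _.
have h1 : 4 / #|Omega|%:R * eps ^+ 2 <= E.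
  apply: le_trans (_ : 4 / #|Omega|%:R * expect nu (fun s => tv (emp s (Tf B)) (emp s B) ^+ 2) <= E).
    rewrite ler_wpM2l ?divr_ge0 ?ler0n //.
    apply: le_trans (jensen _ pnu).
    by rewrite -[eps ^+ 2]/(eps * eps) -[_ ^+ 2]/(_ * _); apply: ler_pM.
  rewrite -expectZ; apply: expect_le => // s.
  by rewrite mulrAC ler_pdivrMr // [X in _ <= X]mulrC tv_sq.
have e4 : 0 <= 4 / #|Omega|%:R * eps ^+ 2 by rewrite mulr_ge0 ?divr_ge0 ?ler0n ?sqr_ge0.
have -> : #|B|%:R * (4 * eps ^+ 3 / #|Omega|%:R) = (eps * #|B|%:R) * (4 / #|Omega|%:R * eps ^+ 2).
  by rewrite !exprS expr0; ring.
apply: le_trans (ler_wpM2r e4 card) _.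
by rewrite ler_wpM2l ?ler0n.
Qed.
End Gain.

Definition hstep (M q m : nat) : nat := m * 2 ^ ((1 + (M.+1 ^ q) ^ m) * m).

Lemma hstep_mono M q m m' : (m <= m')%N -> (hstep M q m <= hstep M q m')%N.
Proof.
move=> h; rewrite /hstep leq_mul // leq_pexp2l // leq_mul // leq_add2l leq_pexp2l //.
by rewrite expn_gt0.
Qed.

Lemma hstep_ge M q m : (m <= hstep M q m)%N.
Proof. by rewrite /hstep leq_pmulr // expn_gt0. Qed.

Lemma iter_mono M q h0 k k' : (k <= k')%N -> (iter k (hstep M q) h0 <= iter k' (hstep M q) h0)%N.
Proof.
elim: k' => [|k' IH]; first by rewrite leqn0 => /eqP->.
rewrite leq_eqVlt ltnS => /orP[/eqP->//|/IH h]; apply: leq_trans h _; exact: hstep_ge.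
Qed.

Lemma refines_trans (T : finType) (A B C : {set {set T}}) : refines A B -> refines B C -> refines A C.
Proof.
move=> hAB hBC X XA; have [Y YB XY] := hAB X XA; have [Z ZC YZ] := hBC Y YB.
by exists Z => //; apply: subset_trans XY YZ.
Qed.

Section Construction.
Variables (R : realType) (Omega : finType) (n : nat) (eps : R) (M : nat) (mu : {ffun config Omega n -> R}).
Notation cfg := (config Omega n).
Notation en := (@en R Omega n).
Notation emp := (emp R).

Definition key (V : {set {set 'I_n}}) (s : cfg) : {ffun {set 'I_n} -> {ffun Omega -> 'I_M.+1}} :=
  [ffun B => if B \in V then [ffun w => inord (Num.truncn (emp s B w * M%:R))] else [ffun => ord0]].

Definition SV V := preim_partition (key V) [set: cfg].

Lemma SV_part V : partition (SV V) [set: cfg].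
Proof. exact: preim_partitionP. Qed.

Lemma SV_card V : (#|SV V| <= (M.+1 ^ #|Omega|) ^ #|V|)%N.
Proof.
rewrite /SV /preim_partition /equivalence_partition.
have -> : [set [set y in [set: cfg] | key V x == key V y] | x in [set: cfg]] =
   [set (fun v => [set y in [set: cfg] | v == key V y]) x | x in [set key V x | x in [set: cfg]]].
  by rewrite -imset_comp.
apply: leq_trans (leq_imset_card _ _) _.
have sub : [set key V x | x in [set: cfg]] \subset pffun_on [ffun=> ord0] V predT.
  apply/subsetP => f /imsetP[s _ ->]; apply/pffun_onP; split => //.
  apply/subsetP => B; rewrite inE /key ffunE; case: ifP => // _; by rewrite eqxx.
apply: leq_trans (subset_leq_card sub) _.
by rewrite card_pffun_on card_ffun card_ord.
Qed.

Lemma SV_diff V A B (s s' : cfg) w : (0 < M)%N -> A \in SV V -> B \in V -> s \in A -> s' \in A ->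
  `|emp s B w - emp s' B w| < M%:R^-1.
Proof.
move=> M0 /imsetP[x _ ->] BV; rewrite !inE => /eqP e1 /eqP e2.
have : key V s B w = key V s' B w by rewrite -e1 -e2.
have K : forall t, key V t B w = inord (Num.truncn (emp t B w * M%:R)).
  by move=> t; rewrite /key ffunE BV ffunE.
rewrite !K.
have bnd : forall t : cfg, (Num.truncn (emp t B w * M%:R) < M.+1)%N.
  move=> t; rewrite ltnS truncn_le_nat.
  apply: le_lt_trans (_ : (M%:R : R) < M.+1%:R); last by rewrite ltr_nat.
  by rewrite -{2}[M%:R]mul1r ler_wpM2r ?ler0n ?emp_le1.
move/(congr1 (@nat_of_ord _)); rewrite !inordK ?bnd // => ee.
have Mp : (0 : R) < M%:R by rewrite ltr0n.
have := truncn_itv (mulr_ge0 (emp_ge0 R s B w) (ler0n R M)).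
have := truncn_itv (mulr_ge0 (emp_ge0 R s' B w) (ler0n R M)).
rewrite ee => /andP[a1 a2] /andP[b1 b2].
rewrite -(ltr_pM2r Mp) mulVf ?gt_eqF // -[X in `|_| * X < _](gtr0_norm Mp) -normrM mulrBl.
rewrite ltr_norml; apply/andP; split.
  by rewrite -natr1 in a2 b2; lra.
by rewrite -natr1 in a2 b2; lra.
Qed.

Lemma SV_tv V A B (s s' : cfg) : (0 < M)%N -> A \in SV V -> B \in V -> s \in A -> s' \in A ->
  tv (emp s B) (emp s' B) <= #|Omega|%:R / M%:R.
Proof.
move=> M0 AS BV sA s'A.
rewrite /tv.
have S0 : 0 <= \sum_w `|emp s B w - emp s' B w| by apply: sumr_ge0 => w _.
apply: le_trans (_ : \sum_w `|emp s B w - emp s' B w| <= _).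
  rewrite ler_pdivrMl ?ltr0n //; lra.
apply: le_trans (_ : \sum_(w : Omega) M%:R^-1 <= _).
  by apply: ler_sum => w _; apply: ltW; exact: SV_diff AS BV sA s'A.
by rewrite sumr_const [X in _ <= X]mulrC mulr_natr.
Qed.

Definition wit (nu : {ffun cfg -> R}) (B : {set 'I_n}) :=
  [pick T : {set 'I_n} | (T \subset B) && (eps * #|B|%:R <= #|T|%:R) &&
     (eps <= expect nu (fun s => tv (emp s T) (emp s B)))].
Definition good nu B := wit nu B == None.
Definition Tw nu B := odflt set0 (wit nu B).

Lemma good_reg nu B : good nu B -> regular_on eps nu B.
Proof.
rewrite /good /wit; case: pickP => // H _ S SB cS.
have := H S; rewrite SB cS /= => /negbT; by rewrite -ltNge.
Qed.

Lemma bad_wit nu B : ~~ good nu B ->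
  [/\ Tw nu B \subset B, eps * #|B|%:R <= #|Tw nu B|%:R &
      eps <= expect nu (fun s => tv (emp s (Tw nu B)) (emp s B))].
Proof.
rewrite /good /Tw /wit; case: pickP => // T /andP[/andP[h1 h2] h3] _ /=; by split.
Qed.

Definition regwb nu (V : {set {set 'I_n}}) :=
  \sum_(B in V | ~~ good nu B) #|B|%:R < eps * n%:R.

Lemma regwb_reg nu V : regwb nu V -> regular_wrt eps nu V.
Proof.
move=> h; exists [set B in V | good nu B]; split.
  by apply/subsetP => B; rewrite inE => /andP[].
split; last by move=> B; rewrite inE => /andP[_]; exact: good_reg.
apply: le_lt_trans h; rewrite le_eqVlt; apply/orP; left; apply/eqP.
apply: eq_bigl => B; rewrite !inE; by case: (B \in V); rewrite ?andbT ?andbF.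
Qed.

Definition homb V := regwb mu V &&
  (\sum_(A in SV V | ~~ regwb (cond mu A) V) measure_of mu A < eps).

Lemma measure_ge0 A : (forall s, 0 <= mu s) -> 0 <= measure_of mu A.
Proof. by move=> h; apply: sumr_ge0. Qed.

Lemma homb_hom V : is_prob mu -> (0 < M)%N -> #|Omega|%:R / M%:R < eps ->
  homb V -> homogeneous eps mu V (SV V).
Proof.
move=> [mu0 mu1] M0 Meps /andP[rmu rS].
exists [set A in SV V | regwb (cond mu A) V && (0 < measure_of mu A)].
split; first by apply/subsetP => A; rewrite inE => /andP[].
split.
  split; first by move=> A; rewrite inE => /andP[_ /andP[_]].
  apply: le_lt_trans rS.
  rewrite [X in X <= _](eq_bigl (fun A => (A \in SV V) &&
       ~~ (regwb (cond mu A) V && (0 < measure_of mu A)))); last first.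
    move=> A; rewrite !inE; by case: (A \in SV V); rewrite ?andbT ?andbF.
  rewrite big_mkcondr [X in _ <= X]big_mkcondr /=; apply: ler_sum => A _.
  case: (boolP (regwb (cond mu A) V)) => r /=.
    case: ifP => //; rewrite -leNgt => h1; exact: h1.
  by rewrite /= lexx.
split.
  move=> A B AS BV s s' sA s'A.
  exact: le_lt_trans (SV_tv M0 AS BV sA s'A) Meps.
split; last exact: regwb_reg.
by move=> A; rewrite inE => /andP[_ /andP[h _]]; exact: regwb_reg.
Qed.

Definition nuo (x : option {set cfg}) := if x is Some A then cond mu A else mu.
Definition Wset V := [set Tw (nuo p.1) p.2 | p in setX (None |: (Some @: SV V)) V].
Definition keyr V (i : 'I_n) := (pblock V i, [set T in Wset V | i \in T]).
Definition Vr V := preim_partition (keyr V) [set: 'I_n].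

Lemma Vr_part V : partition (Vr V) [set: 'I_n].
Proof. exact: preim_partitionP. Qed.

Lemma Wset_card V : (#|Wset V| <= (1 + #|SV V|) * #|V|)%N.
Proof.
apply: leq_trans (leq_imset_card _ _) _.
rewrite cardsX leq_mul2r; apply/orP; right.
rewrite cardsU1; apply: leq_add; first by case: (_ \notin _).
exact: leq_imset_card.
Qed.

Lemma Vr_card V : partition V [set: 'I_n] ->
  (#|Vr V| <= #|V| * 2 ^ ((1 + #|SV V|) * #|V|))%N.
Proof.
move=> /and3P[/eqP covV tV _].
rewrite /Vr /preim_partition /equivalence_partition.
have -> : [set [set y in [set: 'I_n] | keyr V x == keyr V y] | x in [set: 'I_n]] =
   [set (fun v => [set y in [set: 'I_n] | v == keyr V y]) x | x in [set keyr V x | x in [set: 'I_n]]].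
  by rewrite -imset_comp.
apply: leq_trans (leq_imset_card _ _) _.
have sub : [set keyr V x | x in [set: 'I_n]] \subset setX V (powerset (Wset V)).
  apply/subsetP => f /imsetP[i _ ->]; rewrite inE /= pblock_mem ?covV ?inE //=.
  by apply/subsetP => T; rewrite inE => /andP[].
apply: leq_trans (subset_leq_card sub) _.
rewrite cardsX card_powerset leq_mul2l; apply/orP; right.
by rewrite leq_pexp2l // Wset_card.
Qed.

Lemma Vr_blk V i j : (j \in pblock (Vr V) i) = (keyr V i == keyr V j).
Proof.
apply: pblock_equivalence_partition; rewrite ?inE //.
by move=> x y z _ _ _; split => //; move/eqP->.
Qed.

Lemma Vr_ref V : partition V [set: 'I_n] -> forall i, pblock (Vr V) i \subset pblock V i.
Proof.
move=> /and3P[/eqP covV tV _] i; apply/subsetP => j; rewrite Vr_blk => /eqP [-> _].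
by rewrite mem_pblock covV inE.
Qed.

Lemma Vr_refines V : partition V [set: 'I_n] -> refines (Vr V) V.
Proof.
move=> pV; have := pV => /and3P[/eqP covV tV _].
have := Vr_part V => /and3P[/eqP covV' tV' nz'].
move=> B BV'; have : B != set0 by apply: contraNneq nz' => <-.
case/set0Pn => i iB.
exists (pblock V i); first by rewrite pblock_mem ?covV ?inE.
by rewrite -(def_pblock tV' BV' iB); exact: Vr_ref.
Qed.

Lemma Vr_union V x B : x \in None |: (Some @: SV V) -> B \in V ->
  forall i, i \in Tw (nuo x) B -> pblock (Vr V) i \subset Tw (nuo x) B.
Proof.
move=> xX BV i iT; apply/subsetP => j; rewrite Vr_blk => /eqP [_ e].
have TW : Tw (nuo x) B \in Wset V.
  by apply/imsetP; exists (x, B) => //; rewrite inE xX BV.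
have : Tw (nuo x) B \in [set T in Wset V | i \in T] by rewrite inE TW iT.
by rewrite e inE => /andP[].
Qed.

Definition Phi V := expect mu (fun s => en s V).

Lemma en_le (s : cfg) V : en s V <= n%:R * #|Omega|%:R.
Proof.
rewrite /en; apply: le_trans (_ : \sum_(i < n) \sum_(w : Omega) (1 : R) <= _).
  apply: ler_sum => i _; apply: ler_sum => w _.
  have h0 := emp_ge0 R s (pblock V i) w; have h1 := emp_le1 R s (pblock V i) w.
  rewrite expr2; nra.
by rewrite sumr_const sumr_const card_ord mulr_natl.
Qed.

Lemma Phi_le V : is_prob mu -> Phi V <= n%:R * #|Omega|%:R.
Proof.
case=> mu0 mu1; rewrite /Phi /expect.
apply: le_trans (_ : \sum_s mu s * (n%:R * #|Omega|%:R) <= _).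
  by apply: ler_sum => s _; rewrite ler_wpM2l // en_le.
by rewrite -mulr_suml mu1 mul1r.
Qed.

Lemma cond_prob A : (forall s, 0 <= mu s) -> 0 < measure_of mu A -> is_prob (cond mu A).
Proof.
move=> mu0 mA; split.
  by move=> s; rewrite /cond ffunE; apply: divr_ge0; [case: ifP | exact: ltW].
rewrite /cond (eq_bigr (fun s => (if s \in A then mu s else 0) / measure_of mu A)); last first.
  by move=> s _; rewrite ffunE.
by rewrite -mulr_suml -big_mkcond /= divff // gt_eqF.
Qed.

Lemma decomp (S : {set {set cfg}}) (P : pred {set cfg}) X :
  (forall s, 0 <= mu s) -> (forall s, 0 <= X s) -> partition S [set: cfg] ->
  \sum_(A in S | P A) measure_of mu A * expect (cond mu A) X <= expect mu X.
Proof.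
move=> mu0 X0 /and3P[/eqP covS tS _].
apply: le_trans (_ : \sum_(A in S | P A) \sum_(s in A) mu s * X s <= _).
  apply: ler_sum => A _.
  have mA0 : 0 <= measure_of mu A by apply: sumr_ge0.
  case: (eqVneq (measure_of mu A) 0) => [->|mAn].
    by rewrite mul0r; apply: sumr_ge0 => s _; rewrite mulr_ge0.
  rewrite /expect mulr_sumr [X in _ <= X]big_mkcond /=; apply: ler_sum => s _.
  rewrite /cond ffunE; case: ifP => _; last by rewrite !mul0r mulr0.
  have -> : measure_of mu A * (mu s / measure_of mu A * X s) = mu s * X s by field.
  by [].
apply: le_trans (_ : \sum_(A in S) \sum_(s in A) mu s * X s <= _).
  rewrite [X in _ <= X](bigID P) /= lerDl; apply: sumr_ge0 => A _.
  by apply: sumr_ge0 => s _; rewrite mulr_ge0.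
by rewrite -big_trivIset // covS /expect sum_setT.
Qed.


Lemma step V : is_prob mu -> 0 < eps -> (0 < #|Omega|)%N -> partition V [set: 'I_n] -> ~~ homb V ->
  n%:R * (4 * eps ^+ 4 * Num.min eps 1 / #|Omega|%:R) <= Phi (Vr V) - Phi V.
Proof.
move=> pmu e0 q0 pV nh.
have [mu0 mu1] := pmu.
have pV' := Vr_part V; have ref := Vr_ref pV.
have qp : (0 : R) < #|Omega|%:R by rewrite ltr0n.
set q := (#|Omega|%:R : R).
set K := eps * n%:R * (4 * eps ^+ 3 / q).
have c0 : 0 <= n%:R * (4 * eps ^+ 4 / q).
  apply: mulr_ge0; [exact: ler0n | apply: divr_ge0; [apply: mulr_ge0 => //; exact: exprn_ge0 (ltW e0) | exact: ltW]].
have D0 : forall s, 0 <= en s (Vr V) - en s V.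
  move=> s; rewrite pyth //; apply: sumr_ge0 => i _; apply: sumr_ge0 => w _; exact: sqr_ge0.
rewrite /Phi -expectB.
have mn1 : Num.min eps 1 <= 1 by rewrite ge_min lexx orbT.
have mne : Num.min eps 1 <= eps by rewrite ge_min lexx.
have gainA : forall nu (x : option {set cfg}), x \in None |: (Some @: SV V) -> nu = nuo x ->
    is_prob nu -> ~~ regwb nu V -> K <= expect nu (fun s => en s (Vr V) - en s V).
  move=> nu x xX -> pnu nr.
  have := @gain R Omega n V (Vr V) (fun B => ~~ good (nuo x) B) (Tw (nuo x)) (nuo x) eps q0 pnu (ltW e0) pV pV' ref.
  have hyp : forall B, B \in V -> ~~ good (nuo x) B ->
      [/\ Tw (nuo x) B \subset B, (forall i, i \in Tw (nuo x) B -> pblock (Vr V) i \subset Tw (nuo x) B),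
      eps * #|B|%:R <= #|Tw (nuo x) B|%:R &
      eps <= expect (nuo x) (fun s => tv (emp s (Tw (nuo x) B)) (emp s B))].
    move=> B BV bB; have [h1 h2 h3] := bad_wit bB; split => //; exact: Vr_union.
  move=> /(_ hyp); apply: le_trans.
  rewrite /K ler_wpM2r //; first by apply: divr_ge0; [apply: mulr_ge0 => //; exact: exprn_ge0 (ltW e0) | exact: ltW].
  by move: nr; rewrite /regwb -leNgt.
case/nandP: nh => [nr | nS].
  apply: le_trans (gainA mu None _ erefl pmu nr); last by rewrite setU11.
  have -> : n%:R * (4 * eps ^+ 4 * Num.min eps 1 / q) = (n%:R * (4 * eps ^+ 4 / q)) * Num.min eps 1 by ring.
  have -> : K = (n%:R * (4 * eps ^+ 4 / q)) * 1 by rewrite /K !exprS; ring.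
  by rewrite ler_wpM2l.
rewrite -leNgt in nS.
apply: le_trans (decomp (fun A => ~~ regwb (cond mu A) V) mu0 D0 (SV_part V)).
apply: le_trans (_ : (\sum_(A in SV V | ~~ regwb (cond mu A) V) measure_of mu A) * K <= _).
  apply: le_trans (_ : eps * K <= _); last first.
    rewrite ler_wpM2r // /K; apply: mulr_ge0; first by apply: mulr_ge0; [exact: ltW | exact: ler0n].
    by apply: divr_ge0; [apply: mulr_ge0 => //; exact: exprn_ge0 (ltW e0) | exact: ltW].
  have -> : n%:R * (4 * eps ^+ 4 * Num.min eps 1 / q) = (n%:R * (4 * eps ^+ 4 / q)) * Num.min eps 1 by ring.
  have -> : eps * K = (n%:R * (4 * eps ^+ 4 / q)) * eps by rewrite /K !exprS; ring.
  by rewrite ler_wpM2l.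
rewrite mulr_suml; apply: ler_sum => A /andP[AS nr].
case: (eqVneq (measure_of mu A) 0) => [->|mA]; first by rewrite !mul0r.
have mp : 0 < measure_of mu A by rewrite lt_neqAle eq_sym mA measure_ge0.
apply: ler_wpM2l; first exact: ltW.
apply: (gainA (cond mu A) (Some A)) => //.
  by rewrite setU1r // imset_f.
exact: cond_prob.
Qed.

Lemma en_ge0 (s : cfg) V : 0 <= en s V.
Proof. by apply: sumr_ge0 => i _; apply: sumr_ge0 => w _; exact: sqr_ge0. Qed.

Lemma iterate V0 h0 k : is_prob mu -> 0 < eps -> (0 < #|Omega|)%N ->
  partition V0 [set: 'I_n] -> (#|V0| <= h0)%N ->
  exists V, [/\ partition V [set: 'I_n], refines V V0,
     (#|V| <= iter k (hstep M #|Omega|) h0)%N &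
     (homb V \/ k%:R * (n%:R * (4 * eps ^+ 4 * Num.min eps 1 / #|Omega|%:R)) <= Phi V)].
Proof.
move=> pmu e0 q0 pV0 cV0.
have [mu0 _] := pmu.
elim: k => [|k [V [pV rV cV hV]]].
  exists V0; split => //; first by move=> B BV; exists B.
  by right; rewrite mul0r; apply: expect_ge0 => // s; exact: en_ge0.
case: (boolP (homb V)) => hb.
  exists V; split => //; last by left.
  apply: leq_trans cV _; exact: hstep_ge.
exists (Vr V); split.
- exact: Vr_part.
- exact: refines_trans (Vr_refines pV) rV.
- apply: leq_trans (Vr_card pV) _; rewrite /=.
  apply: leq_trans (hstep_mono M #|Omega| cV).
  rewrite /hstep leq_mul2l leq_pexp2l ?orbT // leq_mul2r leq_add2l SV_card orbT //.
- right; case: hV => [hV|hV]; first by rewrite hV in hb.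
  have := step pmu e0 q0 pV hb.
  rewrite -natr1 mulrDl mul1r; lra.
Qed.

End Construction.

Theorem theorem2p1 (R : realType) (Omega : finType) :
  (0 < #|Omega|)%N ->
  forall eps : R, 0 < eps ->
  exists N : nat, (0 < N)%N /\
    forall n : nat, (N < n)%N ->
    forall mu : {ffun config Omega n -> R}, is_prob mu ->
    forall V0 : {set {set 'I_n}},
      partition V0 [set: 'I_n] -> #|V0|%:R <= eps^-1 ->
      exists (V : {set {set 'I_n}}) (S : {set {set config Omega n}}),
        [/\ partition V [set: 'I_n], refines V V0,
            partition S [set: config Omega n],
            (#|V| + #|S| <= N)%N
          & homogeneous eps mu V S].
Proof.
move=> q0 eps e0.
set q := #|Omega|.
have qp : (0 : R) < q%:R by rewrite ltr0n.
set M := (Num.truncn (q%:R / eps)).+1.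
have M0 : (0 < M)%N by [].
have Mp : (0 : R) < M%:R by rewrite ltr0n.
have Meps : q%:R / M%:R < eps.
  rewrite ltr_pdivrMr // mulrC -ltr_pdivrMr //.
  exact: truncnS_gt.
set cst : R := 4 * eps ^+ 4 * Num.min eps 1 / q%:R.
have cp : 0 < cst.
  rewrite /cst divr_gt0 // mulr_gt0 // ?mulr_gt0 ?exprn_gt0 //.
  by rewrite lt_min e0 ltr01.
set K := (Num.truncn (q%:R / cst)).+1.
have Kc : q%:R < K%:R * cst.
  rewrite -ltr_pdivrMr //; exact: truncnS_gt.
set h0 := Num.truncn eps^-1.
set HK := iter K (hstep M q) h0.
exists (HK + (M.+1 ^ q) ^ HK)%N; split; first by rewrite addn_gt0 expn_gt0 expn_gt0 orbT.
move=> n nN mu pmu V0 pV0 cV0.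
have n0 : (0 < n)%N by apply: leq_ltn_trans nN.
have ch0 : (#|V0| <= h0)%N by rewrite truncn_ge_nat // invr_ge0 ltW.
have [V [pV rV cV hV]] := @iterate R Omega n eps M mu V0 h0 K pmu e0 q0 pV0 ch0.
have hb : homb eps M mu V.
  case: hV => // hV; exfalso.
  have := Phi_le V pmu.
  have np : (0 : R) < n%:R by rewrite ltr0n.
  move: hV; rewrite -/cst => hV hP.
  have : n%:R * q%:R < n%:R * (K%:R * cst) by rewrite ltr_pM2l.
  lra.
exists V, (SV R Omega M V); split => //.
- exact: SV_part.
- apply: leq_add; first exact: cV.
  apply: leq_trans (SV_card R Omega M V) _.
  have pos : (0 < M.+1 ^ q)%N by rewrite expn_gt0.
  exact: leq_pexp2l pos cV.
- exact: homb_hom pmu M0 Meps hb.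
Qed.
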